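(* Let $G$ be a connected graph of order $n\ge 2$. Then $F_c(G)=n-1$ if and only if $G$ is the complete graph $K_n$ (with $n\ge 2$) or the star $K_{1,n-1}$ with $n\ge 4$.
   Context: Forcing process: given a set of initially colored vertices, at each step a colored vertex with exactly one non-colored neighbor forces (colors) that neighbor. A set $S\subseteq V(G)$ is a forcing set if iterating this process from $S$ eventually colors all vertices; it is a connected forcing set if moreover the induced subgraph $G[S]$ is connected. $F_c(G)$, the connected forcing number, is the minimum cardinality of a connected forcing set of $G$. *)

(* Defs.v *)
From mathcomp Require Import all_boot.
Set Implicit Arguments. Unset Strict Implicit. Unset Printing Implicit Defensive.

Section Forcing.
Variables (T : finType) (e : rel T).

Definition simple_graph : Prop := symmetric e /\ irreflexive e.

Definition connected_graph : Prop := forall x y : T, connect e x y.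

Definition force_step (S : {set T}) : {set T} :=
  S :|: [set w | (w \notin S) &&
          [exists u in S, e u w &&
             [forall y, (e u y && (y \notin S)) ==> (y == w)]]].

(* The final colored set obtained by iterating the forcing process
   (it stabilises after at most #|T| rounds). *)
Definition closure (S : {set T}) : {set T} := iter #|T| force_step S.

Definition forcing_set (S : {set T}) : bool := closure S == [set: T].

Definition induced_connected (S : {set T}) : bool :=
  [forall x in S, forall y in S,
     connect [rel a b | [&& e a b, a \in S & b \in S]] x y].

Definition connected_forcing_set (S : {set T}) : bool :=
  forcing_set S && induced_connected S.

(* F_c(G): minimum cardinality of a connected forcing set
   (the default #|T| is attained by [set: T] for connected G). *)
Definition Fc : nat :=
  \big[minn/#|T|]_(S : {set T} | connected_forcing_set S) #|S|.

Definition is_complete : Prop := forall x y : T, x != y -> e x y.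

Definition is_star : Prop :=
  exists c : T, forall x y : T, e x y = (x != y) && ((x == c) || (y == c)).

End Forcing.

(* Main.v *)
Require Import Defs.
From mathcomp Require Import all_boot zify.
Set Implicit Arguments. Unset Strict Implicit. Unset Printing Implicit Defensive.

Section Aux.
Variables (T : finType) (e : rel T).
Hypothesis esym : symmetric e.
Hypothesis eirr : irreflexive e.

Definition restr (P : {set T}) : rel T := [rel x y | [&& e x y, x \in P & y \in P]].

Lemma restr_sym P : connect_sym (restr P).
Proof.
apply: sym_connect_sym => x y; rewrite /restr /= esym; by case: (x \in P); case: (y \in P); rewrite ?andbF ?andbT.
Qed.

Lemma force_ext (X : {set T}) : X \subset force_step e X.
Proof. exact: subsetUl. Qed.

Lemma force_full (X : {set T}) b : (forall x, x != b -> x \in X) -> (exists w, e w b) ->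
  force_step e X = setT.
Proof.
move=> HX [w ew]; apply/setP => x; rewrite in_setT /force_step !inE.
case xX: (x \in X) => //=.
case: (eqVneq x b) => [xb|]; last first.
  by move=> /HX H; rewrite H in xX.
subst x; apply/existsP; exists w.
have wb : w != b by apply: contraTneq ew => ->; rewrite eirr.
rewrite HX //= ew /=; apply/forallP => y; apply/implyP => /andP [_ yX].
by apply: contraNT yX => /HX.
Qed.

Lemma iter_fix (f : {set T} -> {set T}) X k : f X = X -> iter k f X = X.
Proof. by move=> fX; elim: k => //= k ->. Qed.

Lemma force_setT : force_step e setT = setT.
Proof. by rewrite /force_step setTU. Qed.

Lemma closure2 (S : {set T}) : 2 <= #|T| -> force_step e (force_step e S) = setT -> Defs.closure e S = setT.
Proof.
move=> n2 H; rewrite /Defs.closure -(subnK n2) iterD /= H.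
by apply: iter_fix; exact: force_setT.
Qed.

Lemma closure1 (S : {set T}) : 1 <= #|T| -> force_step e S = setT -> Defs.closure e S = setT.
Proof.
move=> n1 H; rewrite /Defs.closure -(subnK n1) iterD /= H.
by apply: iter_fix; exact: force_setT.
Qed.

Lemma neighbor_ex (conn : connected_graph e) (n2 : 2 <= #|T|) a : exists w, e a w.
Proof.
have [x xa] : exists x, x != a.
  case: (pickP (fun x => x != a)) => [x xa|H]; first by exists x.
  suff: #|T| <= 1 by rewrite leqNgt n2.
  have Ha : forall y, y = a by move=> y; move: (H y) => /negbFE/eqP.
  by apply/fintype_le1P => x y; rewrite (Ha x) (Ha y).
move: (conn a x) => /connectP [[|y p] /= Hp Hl]; first by rewrite Hl eqxx in xa.
by case/andP: Hp => ay _; exists y.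
Qed.

Lemma force_two (conn : connected_graph e) (n2 : 2 <= #|T|) a b u :
  u != a -> u != b -> e u a -> ~~ e u b ->
  Defs.closure e [set x | (x != a) && (x != b)] = setT.
Proof.
move=> ua ub eua eub; apply: closure2 => //.
have [w ew] := neighbor_ex conn n2 b.
have ab : a != b by apply: contraNneq eub => <-.
apply: (@force_full _ b) => [x xb|]; last by exists w; rewrite esym.
case xa: (x == a); last by apply: (subsetP (force_ext _)); rewrite inE xa xb.
rewrite (eqP xa) /force_step !inE eqxx /=; apply/existsP; exists u.
rewrite inE ua ub eua /=; apply/forallP => y; apply/implyP => /andP [uy].
rewrite inE negb_and !negbK => /orP [] // /eqP yb; subst y.
by rewrite uy in eub.
Qed.

Lemma force_one (conn : connected_graph e) (n2 : 2 <= #|T|) b :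
  Defs.closure e [set x | x != b] = setT.
Proof.
apply: closure1; first exact: leq_trans n2.
have [w ew] := neighbor_ex conn n2 b.
by apply: (@force_full _ b) => [x xb|]; [rewrite inE | exists w; rewrite esym].
Qed.

Lemma stuck (X : {set T}) : (forall u w, u \in X -> w \notin X -> e u w ->
    exists y, [/\ y \notin X, y != w & e u y]) -> force_step e X = X.
Proof.
move=> H; apply/setP => w; rewrite /force_step !inE.
case wX: (w \in X) => //=; apply/negbTE/existsPn => u.
apply/negP => /andP [uX /andP [euw /forallP Hy]].
have [y [yX yw euy]] := H u w uX (negbT wX) euw.
by move: (Hy y); rewrite euy yX /= (negbTE yw).
Qed.

Lemma closure_stuck (S : {set T}) : force_step e S = S -> Defs.closure e S = S.
Proof. exact: iter_fix. Qed.


Section Far.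
Variables (P : {set T}) (r : T).
Hypothesis rP : r \in P.
Hypothesis Pconn : forall x, x \in P -> connect (restr P) r x.

Definition stp (X : {set T}) : {set T} := X :|: [set y in P | [exists x in X, e x y]].
Definition R k := iter k stp [set r].

Lemma R_sub k : R k \subset P.
Proof.
elim: k => [|k IH] /=; first by rewrite sub1set.
rewrite /stp subUset IH /=; apply/subsetP => y; rewrite inE => /andP [].
by [].
Qed.

Lemma R_path p y k : y \in R k -> path (restr P) y p -> last y p \in R (k + size p).
Proof.
elim: p y k => [|z p IH] y k /=; first by rewrite addn0.
move=> yR /andP [/andP [eyz /andP [_ zP]] Hp].
rewrite addnS -addSn; apply: IH Hp.
rewrite /R iterS -/(R k) /stp !inE zP /=; apply/orP; right.
by apply/existsP; exists y; rewrite yR.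
Qed.

Lemma exR x : exists k, (x \in R k) || (x \notin P).
Proof.
case xP: (x \in P); last by exists 0; rewrite orbT.
move: (Pconn xP) => /connectP [p Hp ->]; exists (0 + size p).
by rewrite R_path // /R /= inE.
Qed.

Definition d x := ex_minn (exR x).

Lemma dP x : x \in P -> x \in R (d x).
Proof. by move=> xP; rewrite /d; case: ex_minnP => m; rewrite xP orbF. Qed.

Lemma d_le x k : x \in R k -> d x <= k.
Proof. by move=> xR; rewrite /d; case: ex_minnP => m _; apply; rewrite xR. Qed.

Lemma d0 x : x \in P -> d x = 0 -> x = r.
Proof. by move=> xP d0; move: (dP xP); rewrite d0 /R /= inE => /eqP. Qed.

Lemma d_parent x : x \in P -> x != r ->
  exists p, [/\ p \in P, e p x & d p < d x].
Proof.
move=> xP xr; case dx: (d x) => [|k]; first by rewrite (d0 xP dx) eqxx in xr.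
move: (dP xP); rewrite dx /R iterS -/(R k) /stp !inE => /orP [xR|].
  by move: (d_le xR); rewrite dx ltnn.
case/andP => _ /existsP [p /andP [pR epx]]; exists p; split => //.
  exact: (subsetP (R_sub k)).
by rewrite ltnS d_le.
Qed.

Lemma far : (exists2 w, w \in P & w != r) ->
  exists b, [/\ b \in P, b != r,
    (forall x, x \in P -> x != b -> connect (restr (P :\ b)) r x) &
    (forall w, w \in P -> w != r -> ~~ e r w -> ~~ e r b)].
Proof.
move=> [w0 w0P w0r].
case: (@arg_maxnP T r (mem P) d rP) => b bP0 bmax.
have bP : b \in P := bP0.
have dpos x : x \in P -> x != r -> 0 < d x.
  by move=> xP; apply: contraNT; rewrite -eqn0Ngt => /eqP /(d0 xP) ->.
exists b; split => //.
- apply: contraTneq (dpos _ w0P w0r) => br.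
  by rewrite -leqNgt (leq_trans (bmax _ w0P)) // br (d_le (k:=0)) // /R /= inE.
- move=> x xP xb.
  have [k] := ubnP (d x); elim: k x xP xb => [|k IH] x xP xb //.
  rewrite ltnS => dxk.
  case: (eqVneq x r) => [->|xr]; first exact: connect0.
  have [p [pP epx dpx]] := d_parent xP xr.
  have pb : p != b.
    by apply: contraTneq dpx => ->; rewrite -leqNgt; exact: bmax.
  apply: (connect_trans (IH p pP pb (leq_trans dpx dxk))).
  by apply: connect1; rewrite /restr /= !inE epx pb pP xb xP.
- move=> w wP wr ew; apply/negP => erb.
  have db : d b <= 1.
    by apply: d_le; rewrite /R /= /stp !inE bP /=; apply/orP; right; apply/existsP; exists r; rewrite inE eqxx.
  have := leq_trans (bmax _ wP) db.
  rewrite leq_eqVlt ltnS leqn0 => /orP [/eqP dw1|/eqP /(d0 wP) wr']; last by rewrite wr' eqxx in wr.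
  have [p [pP epw dpw]] := d_parent wP wr.
  move: dpw; rewrite dw1 ltnS leqn0 => /eqP /(d0 pP) pr.
  by rewrite -pr epw in ew.
Qed.

End Far.
End Aux.

Lemma bigmin_le (I : eqType) (s : seq I) (Q : pred I) (F : I -> nat) x0 j :
  j \in s -> Q j -> \big[minn/x0]_(i <- s | Q i) F i <= F j.
Proof.
elim: s => // a s IH; rewrite inE big_cons => /orP [/eqP <-| js] Qj.
  by rewrite Qj geq_minl.
case: (Q a); last exact: IH.
exact: leq_trans (geq_minr _ _) (IH js Qj).
Qed.

Section Aux2.
Variables (T : finType) (e : rel T).
Hypothesis esym : symmetric e.
Hypothesis eirr : irreflexive e.

Lemma Fc_le S : connected_forcing_set e S -> Fc e <= #|S|.
Proof. by move=> H; rewrite /Fc; apply: bigmin_le => //; exact: mem_index_enum. Qed.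

Lemma Fc_ge k : (forall S, connected_forcing_set e S -> k <= #|S|) -> k <= #|T| -> k <= Fc e.
Proof.
move=> H kT; rewrite /Fc; apply: (big_ind (fun x => k <= x)) => //.
  by move=> x y; rewrite leq_min => -> ->.
Qed.

Lemma ic_root (S : {set T}) r : r \in S -> (forall x, x \in S -> connect (restr e S) r x) ->
  induced_connected e S.
Proof.
move=> rS H; apply/forallP => x; apply/implyP => xS; apply/forallP => y; apply/implyP => yS.
change (connect (restr e S) x y).
by apply: (connect_trans (y:=r)); [rewrite restr_sym // H | apply: H].
Qed.

Lemma two_ok (conn : connected_graph e) (n2 : 2 <= #|T|) a b u :
  u != a -> u != b -> e u a -> ~~ e u b ->
  induced_connected e [set x | (x != a) && (x != b)] ->
  exists S, connected_forcing_set e S /\ #|S| <= #|T| - 2.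
Proof.
move=> ua ub eua eub ic; exists [set x | (x != a) && (x != b)]; split.
  by rewrite /connected_forcing_set ic andbT /forcing_set (force_two esym eirr conn n2 ua ub eua eub).
have ab : a != b by apply: contraNneq eub => <-.
have -> : [set x | (x != a) && (x != b)] = ~: [set a; b] by apply/setP => x; rewrite !inE negb_or.
move: (cardsC [set a; b]); rewrite cards2 ab; lia.
Qed.

Lemma complete_lb : is_complete e -> forall S, connected_forcing_set e S -> #|T| - 1 <= #|S|.
Proof.
move=> Hc S /andP [fS _]; rewrite leqNgt; apply/negP => small.
have : 1 < #|~: S| by move: (cardsC S); lia.
case/card_gt1P => y1 [y2 [y1S y2S y12]].
rewrite inE in y1S; rewrite inE in y2S.
have st : force_step e S = S.
  apply: stuck => u w uS wS euw.
  have nu y : y \notin S -> e u y by move=> yS; apply: Hc; apply: contraNneq yS => <-.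
  case: (eqVneq y1 w) => [y1w|y1w]; first by exists y2; rewrite -y1w eq_sym y12 y2S nu.
  by exists y1; rewrite y1w y1S nu.
move: fS; rewrite /forcing_set closure_stuck // => /eqP ST.
by rewrite ST in_setT in y1S.
Qed.

Lemma star_stuck c (Hc : forall x y, e x y = (x != y) && ((x == c) || (y == c))) (X : {set T}) :
  c \in X -> 1 < #|~: X| -> force_step e X = X.
Proof.
move=> cX; case/card_gt1P => y1 [y2 [y1S y2S y12]].
rewrite inE in y1S; rewrite inE in y2S.
apply: stuck => u w uS wS euw.
case: (eqVneq u c) => [uc|uc]; last first.
  by move: euw; rewrite Hc (negbTE uc) /= => /andP [_ /eqP wc]; rewrite -wc (negbTE wS) in cX.
have nu y : y \notin X -> e u y.
  by move=> yS; rewrite Hc uc eqxx /= andbT; apply: contraNneq yS => <-; rewrite -uc.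
case: (eqVneq y1 w) => [y1w|y1w]; first by exists y2; rewrite -y1w eq_sym y12 y2S nu.
by exists y1; rewrite y1w y1S nu.
Qed.

Lemma star_lb : is_star e -> 4 <= #|T| -> forall S, connected_forcing_set e S -> #|T| - 1 <= #|S|.
Proof.
move=> [c Hc] n4 S /andP [fS icS]; rewrite leqNgt; apply/negP => small.
case cS: (c \in S).
  move: fS; rewrite /forcing_set closure_stuck; last first.
    by apply: (star_stuck Hc) => //; move: (cardsC S); lia.
  move=> /eqP ST; move: small; rewrite ST cardsT; lia.
have uniqS : forall x y, x \in S -> y \in S -> x = y.
  move=> x y xS yS; move: icS => /forallP/(_ x)/implyP/(_ xS)/forallP/(_ y)/implyP/(_ yS).
  move/connectP => [[|z p] /= Hp ->] //.
  case/andP: Hp => /and3P [exz _ zS] _.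
  have xc : x != c by apply: contraTneq xS => ->; rewrite cS.
  have zc : z != c by apply: contraTneq zS => ->; rewrite cS.
  by move: exz; rewrite Hc (negbTE xc) (negbTE zc) andbF.
case: (set_0Vmem S) => [S0|[x xS]].
  move: fS; rewrite /forcing_set closure_stuck; last by apply: stuck => u w; rewrite S0 inE.
  move=> /eqP ST; move: small; rewrite ST cardsT; lia.
have Sx : S = [set x] by apply/setP => y; rewrite inE; apply/idP/eqP => [yS|->//]; exact: uniqS.
have xc : x != c by apply: contraTneq xS => ->; rewrite cS.
have f1 : force_step e S = [set x; c].
  apply/setP => z; rewrite /force_step Sx !inE.
  case: (eqVneq z x) => [//|zx] /=.
  apply/idP/idP.
    case/existsP => u /andP [/[!inE] /eqP -> /andP [exz _]].
    by move: exz; rewrite Hc (negbTE xc) /= => /andP [].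
  move=> /eqP ->; apply/existsP; exists x; rewrite !inE eqxx /=.
  rewrite Hc xc eqxx orbT /=; apply/forallP => y; apply/implyP.
  by rewrite Hc (negbTE xc) /= => /andP [/andP [_ ->]].
have Yst : force_step e [set x; c] = [set x; c].
  apply: (star_stuck Hc); first by rewrite !inE eqxx orbT.
  by move: (cardsC [set x; c]); rewrite cards2 xc; lia.
move: fS; rewrite /forcing_set /Defs.closure -(subnK (_ : 1 <= #|T|)); last lia.
rewrite iterD /= f1 iter_fix // => /eqP YT.
by move: (cards2 x c); rewrite YT cardsT xc; lia.
Qed.

End Aux2.

From Stdlib Require Import Classical.

Lemma exists_small (T : finType) (e : rel T) :
  simple_graph e -> connected_graph e -> 2 <= #|T| ->
  ~ is_complete e -> ~ (is_star e /\ 4 <= #|T|) ->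
  exists S, connected_forcing_set e S /\ #|S| <= #|T| - 2.
Proof.
move=> [esym eirr] conn n2 ncomp nstar.
have /card_gt0P [r0 _] : 0 < #|T| by exact: ltnW n2.
have [w0 ew0] := neighbor_ex conn n2 r0.
have w0r : w0 != r0 by apply: contraTneq ew0 => ->; rewrite eirr.
have Pc0 : forall x, x \in setT -> connect (restr e setT) r0 x.
  by move=> x _; rewrite (@eq_connect _ _ e) // => u v; rewrite /restr /= !in_setT !andbT.
have [|a [_ ar0 conn1 _]] := @far T e setT r0 (in_setT _) Pc0; first by exists w0.
have [r' ear] := neighbor_ex conn n2 a.
have r'a : r' != a by apply: contraTneq ear => ->; rewrite eirr.
set P := setT :\ a.
have inP x : (x \in P) = (x != a) by rewrite !inE andbT.
have r'P : r' \in P by rewrite inP.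
have Pconn : forall x, x \in P -> connect (restr e P) r' x.
  move=> x; rewrite inP => xa.
  apply: (connect_trans (y:=r0)); last exact: conn1.
  by rewrite restr_sym // conn1.
have eq2 b : [set x | (x != a) && (x != b)] = P :\ b by apply/setP => x; rewrite !inE andbT andbC.
case: (classic (exists w, [/\ w != a, w != r' & ~~ e r' w])) => [[w [wa wr nw]]|noA].
  have [|b [bP br' conn2 nadj]] := @far T e P r' r'P Pconn.
    by exists w; rewrite ?inP.
  have nb : ~~ e r' b by apply: (nadj w) => //; rewrite inP.
  have ba : b != a by rewrite -inP.
  have r'b : r' != b by rewrite eq_sym.
  have era : e r' a by rewrite esym.
  apply: (@two_ok T e esym eirr conn n2 a b r' r'a r'b era nb).
  rewrite eq2; apply: (ic_root esym (r:=r')); first by rewrite !inE r'b r'a.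
  by move=> x /setD1P [xb xP]; apply: conn2.
have HB : forall w, w != a -> w != r' -> e r' w.
  move=> w wa wr; apply: NNPP => nw; apply: noA; exists w; split => //; exact/negP.
have er'a : e r' a by rewrite esym.
case: (classic (exists b u, [/\ b != a, b != r', u != a, u != b & e u a != e u b])) =>
   [[b [u [ba br ua ub Hu]]]|noB].
  have icS : induced_connected e [set x | (x != a) && (x != b)].
    apply: (ic_root esym (r:=r')); first by rewrite !inE r'a eq_sym br.
    move=> x; rewrite inE => /andP [xa xb]; case: (eqVneq x r') => [->|xr]; first exact: connect0.
    by apply: connect1; rewrite /restr /= !inE HB // r'a eq_sym br xa xb.
  case eua: (e u a); move: Hu; rewrite eua => /= eub.
    exact: (@two_ok T e esym eirr conn n2 a b u).
  have eqs : [set x | (x != a) && (x != b)] = [set x | (x != b) && (x != a)].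
    by apply/setP => x; rewrite !inE andbC.
  rewrite eqs in icS.
  have eub' : e u b by move: eub; case: (e u b).
  have nua : ~~ e u a by rewrite eua.
  exact: (@two_ok T e esym eirr conn n2 b a u ub ua eub' nua icS).
have Hno : forall b u, b != a -> b != r' -> u != a -> u != b -> e u a = e u b.
  move=> b u ba br ua ub; apply: NNPP => Hne; apply: noB; exists b, u; split => //.
  by apply/eqP.
case: (classic (forall y, y != a -> y != r' -> e y a)) => [Hall|].
  exfalso; apply: ncomp => x y xy.
  case: (eqVneq x r') => [xr|xr].
    by subst x; case: (eqVneq y a) => [->//|ya]; apply: HB => //; rewrite eq_sym.
  case: (eqVneq y r') => [yr|yr].
    by subst y; rewrite esym; case: (eqVneq x a) => [->//|xa]; apply: HB.
  case: (eqVneq x a) => [xa|xa]; first by subst x; rewrite esym Hall // eq_sym.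
  case: (eqVneq y a) => [->|ya]; first exact: Hall.
  by rewrite -(Hno y x) // ?Hall // eq_sym.
move=> /not_all_ex_not [y0 H0].
have [y0a H1] := imply_to_and _ _ H0.
have [y0r ny0] := imply_to_and _ _ H1.
have ny0' : ~~ e y0 a by apply/negP.
have F1 : forall x, x != a -> x != r' -> ~~ e x a.
  move=> x xa xr; case: (eqVneq x y0) => [->//|xy0].
  rewrite (Hno y0 x) // esym -(Hno x y0) //; rewrite eq_sym; exact: xy0.
have F2 : forall x z, x != a -> x != r' -> z != a -> z != r' -> x != z -> ~~ e x z.
  by move=> x z xa xr za zr xz; rewrite -(Hno z x) // F1.
case: (classic (exists x, [/\ x != a, x != r' & x != y0])) => [[x [xa xr xy0]]|noC].
  exfalso; apply: nstar; split.
    exists r' => p q; case: (eqVneq p q) => [<-|pq]; first by rewrite eirr.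
    case: (eqVneq p r') => [pr|pr].
      subst p; rewrite /=.
      by case: (eqVneq q a) => [->//|qa]; apply: HB => //; rewrite eq_sym.
    case: (eqVneq q r') => [qr|qr].
      subst q; rewrite /= ?orbT esym.
      by case: (eqVneq p a) => [->//|pa]; apply: HB.
    rewrite /=; apply/negbTE.
    case: (eqVneq p a) => [pa|pa].
      by subst p; rewrite esym; apply: F1 => //; rewrite eq_sym.
    case: (eqVneq q a) => [qa|qa]; first by subst q; exact: F1.
    exact: F2.
  have -> : #|T| = #|(a |: (r' |: (y0 |: [set x])))| + #|~: (a |: (r' |: (y0 |: [set x])))| by rewrite cardsC.
  rewrite !cardsU1 cards1 !inE negb_or negb_or eq_sym r'a /= .
  rewrite (eq_sym r' y0) (negbTE y0r) (eq_sym r' x) (negbTE xr) (eq_sym a y0) y0a (eq_sym a x) xa (eq_sym y0 x) xy0 /=.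
  lia.
have y0x : forall x, x != a -> x != r' -> x = y0.
  move=> x xa xr; apply: NNPP => xy; apply: noC; exists x; split => //; exact/eqP.
apply: (@two_ok T e esym eirr conn n2 r' y0 a) => //.
- by rewrite eq_sym.
- by rewrite eq_sym.
- by rewrite esym.
- apply: (ic_root esym (r:=a)); first by rewrite !inE eq_sym r'a eq_sym y0a.
  move=> x; rewrite inE => /andP [xr xy0]; case: (eqVneq x a) => [->|xa]; first exact: connect0.
  by rewrite (y0x x xa xr) eqxx in xy0.
Qed.

Theorem theorem1 (T : finType) (e : rel T) :
  simple_graph e -> connected_graph e -> 2 <= #|T| ->
  (Fc e = #|T| - 1 <-> (is_complete e \/ (is_star e /\ 4 <= #|T|))).
Proof.
move=> sg conn n2; have [esym eirr] := sg.
split.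
- move=> Hf; case: (classic (is_complete e \/ (is_star e /\ 4 <= #|T|))) => // H.
  have [S [cS sS]] := exists_small sg conn n2 (fun c => H (or_introl c)) (fun s => H (or_intror s)).
  have := Fc_le cS; rewrite Hf; lia.
- move=> H.
  have up : Fc e <= #|T| - 1.
    have [r0 ic] : exists r0, induced_connected e [set x | x != r0].
      case: H => [Hc|[[c Hc] n4]].
        have /card_gt0P [r0 _] : 0 < #|T| by exact: ltnW n2.
        have [w ew] := neighbor_ex conn n2 r0.
        have wr : w != r0 by apply: contraTneq ew => ->; rewrite eirr.
        exists r0; apply: (ic_root esym (r:=w)); first by rewrite inE.
        move=> x; rewrite inE => xr; case: (eqVneq x w) => [->|xw]; first exact: connect0.
        have ewx : e w x by apply: Hc; rewrite eq_sym.
        by apply: connect1; rewrite /restr /= !inE xr wr ewx.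
      have [w ew] := neighbor_ex conn n2 c.
      have wc : w != c by apply: contraTneq ew => ->; rewrite eirr.
      exists w; apply: (ic_root esym (r:=c)); first by rewrite inE eq_sym.
      move=> x; rewrite inE => xw; case: (eqVneq x c) => [->|xc]; first exact: connect0.
      have ecx : e c x by rewrite Hc eqxx orTb andbT eq_sym xc.
      by apply: connect1; rewrite /restr /= !inE ecx xw (eq_sym c w) wc.
    have -> : #|T| - 1 = #|[set x | x != r0]|.
      have -> : [set x | x != r0] = ~: [set r0] by apply/setP => x; rewrite !inE.
      by move: (cardsC [set r0]); rewrite cards1; lia.
    apply: Fc_le; rewrite /connected_forcing_set /forcing_set ic andbT.
    by rewrite (force_one esym eirr conn n2).
  apply/eqP; rewrite eqn_leq up /=; apply: Fc_ge; last exact: leq_subr.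
  case: H => [Hc|[Hs n4]]; [exact: complete_lb | exact: star_lb].
Qed.
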